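(* Let $\mathcal{C}\subseteq 2^{[n]}$ and $\mathcal{D}\subseteq 2^{[m]}$ be codes and let $f:\mathcal{C}\to\mathcal{D}$ be a morphism. If $\mathcal{C}$ is convex, then the image code $f(\mathcal{C})\subseteq 2^{[m]}$ is convex and $\mathrm{mindim}(f(\mathcal{C}))\le \mathrm{mindim}(\mathcal{C})$. In particular, if $\mathcal{C}$ and $\mathcal{D}$ are isomorphic, then $\mathcal{C}$ is convex if and only if $\mathcal{D}$ is convex, and when both are convex they have the same minimal embedding dimension.
   Context: A code is a subset $\mathcal{C}\subseteq 2^{[n]}$ (a family of subsets of $[n]=\{1,\dots,n\}$); its elements are called codewords. For $\sigma\subseteq[n]$, the trunk of $\sigma$ in $\mathcal{C}$ is $\mathrm{Tk}_{\mathcal{C}}(\sigma)=\{c\in\mathcal{C}\mid \sigma\subseteq c\}$. A subset of $\mathcal{C}$ is a trunk in $\mathcal{C}$ if it is empty or equals $\mathrm{Tk}_{\mathcal{C}}(\sigma)$ for some $\sigma\subseteq[n]$. A function $f:\mathcal{C}\to\mathcal{D}$ between codes is a morphism if for every trunk $T$ in $\mathcal{D}$, the preimage $f^{-1}(T)$ is a trunk in $\mathcal{C}$; it is an isomorphism if it has an inverse function that is also a morphism. Given sets $U_1,\dots,U_n\subseteq X$, the code of $\mathcal{U}=\{U_1,\dots,U_n\}$ in $X$ is $\mathrm{code}(\mathcal{U},X)=\{\sigma\subseteq[n]\mid \bigcap_{i\in\sigma}U_i\setminus\bigcup_{j\notin\sigma}U_j\neq\emptyset\}$, where the empty intersection is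 $X$. A code $\mathcal{C}\subseteq 2^{[n]}$ is convex if $\mathcal{C}=\mathrm{code}(\mathcal{U},X)$ for some open convex $X\subseteq\mathbb{R}^d$ and convex open sets $U_1,\dots,U_n\subseteq X$; $\mathrm{mindim}(\mathcal{C})$ is the smallest such $d$. *)

(* Defs.v *)
From Stdlib Require Import Reals.
From mathcomp Require Import all_boot.
Set Implicit Arguments. Unset Strict Implicit. Unset Printing Implicit Defensive.

Definition point (d : nat) := 'I_d -> R.

(* Open subset of R^d (sup-norm balls; same topology as Euclidean). *)
Definition is_open (d : nat) (U : point d -> Prop) : Prop :=
  forall x, U x -> exists eps : R, Rlt 0 eps /\
    forall y : point d, (forall i, Rlt (Rabs (y i - x i)) eps) -> U y.

Definition is_convex_set (d : nat) (U : point d -> Prop) : Prop :=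
  forall x y t, U x -> U y -> Rle 0 t -> Rle t 1 ->
    U (fun i => Rplus (Rmult t (x i)) (Rmult (Rminus 1 t) (y i))).

Definition code (n : nat) := {set {set 'I_n}}.

Definition Tk n (C : code n) (sigma : {set 'I_n}) : code n :=
  [set c in C | sigma \subset c].

Definition is_trunk n (C : code n) (T : code n) : Prop :=
  T = set0 \/ exists sigma, T = Tk C sigma.

(* f : C -> D is represented by a total function on codewords which maps C
   into D; only its values on C matter. *)
Definition maps_into n m (C : code n) (D : code m) (f : {set 'I_n} -> {set 'I_m}) :=
  forall c, c \in C -> f c \in D.

Definition preimage n m (C : code n) (f : {set 'I_n} -> {set 'I_m}) (T : code m) : code n :=
  [set c in C | f c \in T].

Definition code_morphism n m (C : code n) (D : code m) (f : {set 'I_n} -> {set 'I_m}) :=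
  maps_into C D f /\ forall T, is_trunk D T -> is_trunk C (preimage C f T).

Definition codes_isomorphic n m (C : code n) (D : code m) : Prop :=
  exists (f : {set 'I_n} -> {set 'I_m}) (g : {set 'I_m} -> {set 'I_n}),
    [/\ code_morphism C D f, code_morphism D C g,
        (forall c, c \in C -> g (f c) = c) &
        (forall e, e \in D -> f (g e) = e)].

Definition is_code_of n d (C : code n) (U : 'I_n -> point d -> Prop) (X : point d -> Prop) :=
  forall sigma : {set 'I_n}, sigma \in C <->
    exists x, X x /\ (forall i, i \in sigma -> U i x) /\ (forall j, j \notin sigma -> ~ U j x).

Definition convex_in n (d : nat) (C : code n) : Prop :=
  exists (X : point d -> Prop) (U : 'I_n -> point d -> Prop),
    is_open X /\ is_convex_set X /\
    (forall i, is_open (U i) /\ is_convex_set (U i) /\ (forall x, U i x -> X x)) /\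
    is_code_of C U X.

Definition convex_code n (C : code n) : Prop := exists d, convex_in d C.

Definition is_mindim n (C : code n) (d : nat) : Prop :=
  convex_in d C /\ forall d', convex_in d' C -> d <= d'.

(* Main.v *)
Require Import Defs.
From Stdlib Require Import Reals.
From mathcomp Require Import all_boot.
From Stdlib Require Import Classical ClassicalEpsilon.
Set Implicit Arguments. Unset Strict Implicit. Unset Printing Implicit Defensive.

Definition asb (P : Prop) : bool :=
  if excluded_middle_informative P then true else false.

Lemma asbP (P : Prop) : asb P <-> P.
Proof. rewrite /asb; case: excluded_middle_informative => //. Qed.

Lemma open_inter d (A B : point d -> Prop) :
  is_open A -> is_open B -> is_open (fun y => A y /\ B y).
Proof.
move=> hA hB x [Ax Bx].
have [e1 [e1p H1]] := hA x Ax.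
have [e2 [e2p H2]] := hB x Bx.
exists (Rmin e1 e2); split; first by apply: Rmin_pos.
move=> y Hy; split.
- apply: H1 => i; apply: Rlt_le_trans (Hy i) _; apply: Rmin_l.
- apply: H2 => i; apply: Rlt_le_trans (Hy i) _; apply: Rmin_r.
Qed.

Lemma open_ext d (A B : point d -> Prop) :
  (forall y, A y <-> B y) -> is_open A -> is_open B.
Proof.
move=> E hA x /E Ax; have [e [ep H]] := hA x Ax.
by exists e; split => // y /H /E.
Qed.

Lemma open_big n d (X : point d -> Prop) (U : 'I_n -> point d -> Prop) (s : seq 'I_n) :
  is_open X -> (forall i, is_open (U i)) ->
  is_open (fun y => X y /\ forall i, i \in s -> U i y).
Proof.
move=> hX hU; elim: s => [|a s IH].
  apply: open_ext hX => y; split => [Xy|[]//]; by split.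
apply: open_ext (open_inter (hU a) IH) => y; split.
- move=> [Ua [Xy H]]; split => // i; rewrite in_cons => /orP [/eqP->//|]; exact: H.
- move=> [Xy H]; split; first by apply: H; rewrite in_cons eqxx.
  split => // i Hi; apply: H; by rewrite in_cons Hi orbT.
Qed.

Section Img.
Variables (n m d : nat) (C : code n) (D : code m) (f : {set 'I_n} -> {set 'I_m}).
Variables (X : point d -> Prop) (U : 'I_n -> point d -> Prop).
Hypothesis hmor : code_morphism C D f.
Hypothesis hX : is_open X.
Hypothesis hXc : is_convex_set X.
Hypothesis hU : forall i, is_open (U i) /\ is_convex_set (U i) /\ (forall x, U i x -> X x).
Hypothesis hC : is_code_of C U X.

Definition cw (x : point d) : {set 'I_n} := [set i | asb (U i x)].

Lemma cwP x i : i \in cw x <-> U i x.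
Proof. by rewrite inE asbP. Qed.

Lemma cw_in x : X x -> cw x \in C.
Proof.
move=> Xx; apply/hC; exists x; split => //; split.
- by move=> i /cwP.
- by move=> j Hj Uj; move/cwP: Uj; rewrite (negbTE Hj).
Qed.

Lemma cw_uniq (c : {set 'I_n}) x : (forall i, i \in c -> U i x) -> (forall j, j \notin c -> ~ U j x) -> c = cw x.
Proof.
move=> H1 H2; apply/setP => i; apply/idP/idP.
- by move=> /H1 /cwP.
- move=> /cwP Ui; case: (boolP (i \in c)) => // /H2; done.
Qed.

Definition Tj (j : 'I_m) : code n := preimage C f (Tk D [set j]).

Definition sig (j : 'I_m) := [pick s | Tj j == Tk C s].

Definition V (j : 'I_m) (y : point d) : Prop :=
  match sig j with Some s => X y /\ forall i, i \in s -> U i y | None => False end.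

Lemma VP j y : X y -> (V j y <-> j \in f (cw y)).
Proof.
move=> Xy.
have key : (cw y \in Tj j) = (j \in f (cw y)).
  rewrite /Tj /preimage /Tk !inE cw_in // sub1set andbC /=.
  by rewrite andbT (proj1 hmor _ (cw_in Xy)).
rewrite -key /V /sig; case: pickP => [s /eqP E|H].
- rewrite E /Tk inE cw_in //=; split.
  + move=> [_ H]; apply/subsetP => i /H /cwP; done.
  + move=> /subsetP H; split => // i /H /cwP; done.
- split => //.
  have := proj2 hmor (Tk D [set j]) (or_intror (ex_intro _ [set j] erefl)).
  case => [E|[s E]]; last by move: (H s); rewrite /Tj E eqxx.
  by rewrite /Tj E inE.
Qed.

Lemma convex_img : convex_in d (f @: C).
Proof.
exists X, V; split => //; split => //; split.
  move=> j; rewrite /V; case: (sig j) => [s|]; split.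
  - apply: open_ext (@open_big _ _ X U (enum s) hX (fun i => proj1 (hU i))) => y.
    by split => -[Xy H]; split => // i; [rewrite -mem_enum | rewrite mem_enum]; apply: H.
  - split; last by move=> x [].
    move=> x y t [Xx Hx] [Xy Hy] t0 t1; split; first exact: hXc.
    move=> i Hi; exact: (proj1 (proj2 (hU i))) _ _ _ (Hx i Hi) (Hy i Hi) t0 t1.
  - by move=> x [].
  - by split; [move=> x y ? [] | move=> x []].
move=> tau; split.
- move=> /imsetP [c cC ->].
  have [x [Xx [H1 H2]]] := proj1 (hC c) cC.
  have Ec := cw_uniq H1 H2; subst c.
  exists x; split => //; split.
  + by move=> j Hj; apply/(VP j Xx).
  + by move=> j Hj /(VP j Xx); rewrite (negbTE Hj).
- move=> [x [Xx [H1 H2]]].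
  have -> : tau = f (cw x).
    apply/setP => j; apply/idP/idP.
    + by move=> /H1 /(VP j Xx).
    + move=> Hj; case: (boolP (j \in tau)) => // /H2; by move/(VP j Xx): Hj.
  by apply: imset_f; apply: cw_in.
Qed.

End Img.

Lemma img_convex_in n m d (C : code n) (D : code m) f :
  code_morphism C D f -> convex_in d C -> convex_in d (f @: C).
Proof.
move=> hm [X [U [hX [hXc [hU hC]]]]].
exact: (convex_img hm hX hXc hU hC).
Qed.

Lemma mindim_exists k (E : code k) :
  forall N d, d <= N -> convex_in d E -> exists d', is_mindim E d' /\ d' <= d.
Proof.
elim => [|N IH] d hd hE.
  exists d; split => //; split => // d' _.
  by move: hd; rewrite leqn0 => /eqP ->.
case: (classic (exists d'', d'' < d /\ convex_in d'' E)) => [[d'' [lt h]]|nex].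
  have hd'' : d'' <= N by rewrite -ltnS; exact: leq_trans lt hd.
  have [d' [H1 H2]] := IH d'' hd'' h.
  by exists d'; split => //; apply: leq_trans H2 (ltnW lt).
exists d; split => //; split => // d' h; rewrite leqNgt; apply/negP => lt.
by apply: nex; exists d'.
Qed.

Lemma iso_img n m (C : code n) (D : code m) f g :
  code_morphism C D f -> (forall e, e \in D -> f (g e) = e) -> code_morphism D C g ->
  f @: C = D.
Proof.
move=> [hf _] hfg [hg _]; apply/setP => e; apply/idP/idP.
- by move=> /imsetP [c cC ->]; apply: hf.
- by move=> eD; rewrite -(hfg e eD); apply: imset_f; apply: hg.
Qed.

Theorem theorem1p1 :
  (forall (n m : nat) (C : code n) (D : code m) (f : {set 'I_n} -> {set 'I_m}),
      code_morphism C D f -> convex_code C ->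
      convex_code (f @: C) /\
      (forall d, is_mindim C d -> exists d', is_mindim (f @: C) d' /\ d' <= d)) /\
  (forall (n m : nat) (C : code n) (D : code m),
      codes_isomorphic C D ->
      (convex_code C <-> convex_code D) /\
      (forall d1 d2, is_mindim C d1 -> is_mindim D d2 -> d1 = d2)).
Proof.
split.
  move=> n m C D f hm [d hd]; split; first by exists d; exact: img_convex_in hm hd.
  move=> d0 [h0 _]; exact: (mindim_exists (leqnn d0) (img_convex_in hm h0)).
move=> n m C D [f [g [hf hg hgf hfg]]].
have EfD := iso_img hf hfg hg.
have EgC := iso_img hg hgf hf.
have CD : forall d, convex_in d C -> convex_in d D.
  by move=> d h; rewrite -EfD; exact: img_convex_in hf h.
have DC : forall d, convex_in d D -> convex_in d C.
  by move=> d h; rewrite -EgC; exact: img_convex_in hg h.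
split.
  by split => -[d h]; exists d; auto.
move=> d1 d2 [h1 m1] [h2 m2]; apply/eqP; rewrite eqn_leq.
by rewrite m1 ?m2 //; [apply: CD | apply: DC].
Qed.
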